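(* Let $G=(V,E)$ be a non-bipartite graph with $n=|V|\ge 5$ vertices, and let $K,K'$ be $k$-cliques of $G$ where $n-k-1=\binom{k}{2}$. Let $H$ be the bipartite graph with vertex set $V\cup E$ (bipartition $\{V,E\}$) and edge set $\{\{v,e\} : v\in V,\ e\in E,\ v\notin e\}$. Let $p=n-k-1$. Let $S$ be obtained from $(V\setminus K)\cup E(K)$ by removing an arbitrary vertex of $V\setminus K$, and let $S'$ be obtained from $(V\setminus K')\cup E(K')$ by removing an arbitrary vertex of $V\setminus K'$ (so $S,S'$ are $(p,p)$-bicliques of $H$). If there is a TJ-sequence of $k$-cliques from $K$ to $K'$ in $G$, then there is a TJ-sequence of $(p,p)$-bicliques from $S$ to $S'$ in $H$.
   Context: For $U\subseteq V$, $E(U)$ denotes the set of edges of $G$ with both endpoints in $U$. A $k$-clique is a set of $k$ pairwise adjacent vertices. A TJ-sequence of $k$-cliques is a sequence $K_0,\dots,K_\ell$ of $k$-cliques with $|K_i\setminus K_{i+1}|=|K_{i+1}\setminus K_i|=1$ for all $i$. A vertex set $S$ is a $(p,q)$-biclique of $H$ if $H[S]$ is isomorphic to $K_{p,q}$; a TJ-sequence of $(p,p)$-bicliques is a sequence $S_0,\dots,S_\ell$ of $(p,p)$-bicliques with $|S_i\setminus S_{i+1}|=|S_{i+1}\setminus S_i|=1$ for all $i$. *)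

(* Defs.v *)
From mathcomp Require Import all_boot.
Set Implicit Arguments. Unset Strict Implicit. Unset Printing Implicit Defensive.

Definition simple_graph (T : finType) (g : rel T) : Prop :=
  irreflexive g /\ symmetric g.

Definition bipartite (T : finType) (g : rel T) : Prop :=
  exists f : T -> bool, forall x y, g x y -> f x != f y.

Definition is_clique (T : finType) (g : rel T) (k : nat) (K : {set T}) : bool :=
  (#|K| == k) && [forall x in K, forall y in K, (x != y) ==> g x y].

Definition is_edge (T : finType) (g : rel T) (e : {set T}) : bool :=
  [exists x, exists y, g x y && (e == [set x; y])].

Definition edge_t (T : finType) (g : rel T) := {e : {set T} | is_edge g e}.

Definition Hrel (T : finType) (g : rel T) : rel (T + edge_t g) :=
  fun a b => match a, b with
             | inl v, inr e => v \notin val e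
             | inr e, inl v => v \notin val e
             | _, _ => false
             end.

(* S is a (p,q)-biclique of h: h[S] is isomorphic to K_{p,q}, i.e. S splits
   into parts A, S\A of sizes p, q with x ~ y (x,y in S) iff exactly one of
   them is in A. *)
Definition is_biclique (U : finType) (h : rel U) (p q : nat) (S : {set U}) : Prop :=
  exists A : {set U}, [/\ A \subset S, #|A| = p, #|S :\: A| = q &
    forall x y, x \in S -> y \in S -> h x y = ((x \in A) != (y \in A))].

Definition tj_step (U : finType) (A B : {set U}) : bool :=
  (#|A :\: B| == 1) && (#|B :\: A| == 1).

Definition TJ_seq (U : finType) (P : {set U} -> Prop) (X Y : {set U}) : Prop :=
  exists s : seq {set U},
    [/\ path (@tj_step U) X s, last X s = Y & forall Z, Z \in X :: s -> P Z].

Definition edges_in (T : finType) (g : rel T) (K : {set T}) : {set T + edge_t g} :=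
  inr @: [set e : edge_t g | val e \subset K].

Definition S_of (T : finType) (g : rel T) (K : {set T}) (v : T) : {set T + edge_t g} :=
  ((inl @: (~: K)) :|: edges_in g K) :\ inl v.

(* Main.v *)
Require Import Defs.
From mathcomp Require Import all_boot.
Set Implicit Arguments. Unset Strict Implicit. Unset Printing Implicit Defensive.

Lemma TJ_refl U P (X : {set U}) : P X -> TJ_seq P X X.
Proof. by move=> PX; exists [::]; split=> // Z; rewrite inE => /eqP->. Qed.

Lemma TJ_trans U P (X Y Z : {set U}) :
  TJ_seq P X Y -> TJ_seq P Y Z -> TJ_seq P X Z.
Proof.
case=> s1 [p1 l1 P1] [s2 [p2 l2 P2]]; exists (s1 ++ s2); split.
- by rewrite cat_path p1 l1.
- by rewrite last_cat l1.
- move=> W; rewrite -cat_cons mem_cat => /orP[/P1//|Ws2].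
  by apply: P2; rewrite inE Ws2 orbT.
Qed.

Lemma TJ_one U P (X Y : {set U}) : P X -> P Y -> tj_step X Y -> TJ_seq P X Y.
Proof.
move=> PX PY st; exists [:: Y]; split => /=; first by rewrite st.
- done.
- by move=> Z; rewrite !inE => /orP[/eqP->|/eqP->].
Qed.

Definition conf (V : finType) (g : rel V) (X : {set V}) (F : {set edge_t g})
  : {set V + edge_t g} :=
  [set z | match z with inl u => u \in X | inr e => e \in F end].

Section Mem.
Lemma inlE (A B : eqType) (u u' : A) : (inl u == inl u' :> A + B) = (u == u').
Proof. by apply/eqP/eqP => [[]|->]. Qed.
Lemma inrE (A B : eqType) (u u' : B) : (inr u == inr u' :> A + B) = (u == u').
Proof. by apply/eqP/eqP => [[]|->]. Qed.
Lemma inlrE (A B : eqType) (u : A) (u' : B) : (inl u == inr u' :> A + B) = false.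
Proof. by []. Qed.
Lemma inrlE (A B : eqType) (u : A) (u' : B) : (inr u' == inl u :> A + B) = false.
Proof. by []. Qed.
Lemma inl_inj' (A B : Type) : injective (@inl A B).
Proof. by move=> x y []. Qed.
Lemma inr_inj' (A B : Type) : injective (@inr A B).
Proof. by move=> x y []. Qed.
Lemma mem_inl (A B : finType) (X : {set A}) u :
  ((inl u : A + B) \in [set inl x | x in X]) = (u \in X).
Proof. by rewrite mem_imset //; apply: inl_inj'. Qed.
Lemma mem_inr (A B : finType) (X : {set B}) u :
  ((inr u : A + B) \in [set inr x | x in X]) = (u \in X).
Proof. by rewrite mem_imset //; apply: inr_inj'. Qed.
Lemma mem_inlr (A B : finType) (X : {set A}) (u : B) :
  ((inr u : A + B) \in [set inl x | x in X]) = false.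
Proof. by apply/imsetP => -[]. Qed.
Lemma mem_inrl (A B : finType) (X : {set B}) (u : A) :
  ((inl u : A + B) \in [set inr x | x in X]) = false.
Proof. by apply/imsetP => -[]. Qed.
End Mem.

Definition memE := (inlE, inrE, inlrE, inrlE, mem_inl, mem_inr, mem_inlr, mem_inrl).

Lemma conf_bic (V : finType) (g : rel V) p (X : {set V}) (F : {set edge_t g}) :
  #|X| = p -> #|F| = p -> (forall x e, x \in X -> e \in F -> x \notin val e) ->
  is_biclique (@Hrel V g) p p (conf X F).
Proof.
move=> cX cF hd; exists (conf X set0); split.
- by apply/subsetP => -[u|e]; rewrite !inE.
- rewrite -cX -(card_imset X (@inl_inj' V (edge_t g))).
  rewrite (_ : conf X set0 = inl @: X) //.
  by apply/setP => -[u|e]; rewrite !inE memE.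
- rewrite -cF -(card_imset F (@inr_inj' V (edge_t g))).
  rewrite (_ : conf X F :\: conf X set0 = inr @: F) //.
  by apply/setP => -[u|e]; rewrite !inE memE ?andNb.

- move=> [x|x] [y|y]; rewrite !inE /= => hx hy; rewrite ?hx ?hy //.
  + by rewrite hd.
  + by rewrite hd.
Qed.

Lemma swapX (V : finType) (g : rel V) (X : {set V}) (F : {set edge_t g}) x1 x2 :
  x1 \in X -> x2 \notin X -> tj_step (conf X F) (conf (x2 |: X :\ x1) F).
Proof.
move=> h1 h2; rewrite /tj_step.
have -> : conf X F :\: conf (x2 |: X :\ x1) F = [set inl x1].
  apply/setP => -[u|e]; rewrite !inE ?memE ?andNb //.
  case: (eqVneq u x1) => [->|ne] /=.
    by rewrite h1 andbT orbF; apply/eqP => e; rewrite -e h1 in h2.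
  by case: eqP => //= _; rewrite andNb.
have -> : conf (x2 |: X :\ x1) F :\: conf X F = [set inl x2].
  apply/setP => -[u|e]; rewrite !inE ?memE ?andNb //.
  case: (eqVneq u x2) => [->|ne]; first by rewrite (negbTE h2).
  by case: (u \in X); rewrite ?andbF.
by rewrite !cards1.
Qed.

Lemma swapF (V : finType) (g : rel V) (X : {set V}) (F : {set edge_t g}) x1 x2 :
  x1 \in F -> x2 \notin F -> tj_step (conf X F) (conf X (x2 |: F :\ x1)).
Proof.
move=> h1 h2; rewrite /tj_step.
have -> : conf X F :\: conf X (x2 |: F :\ x1) = [set inr x1].
  apply/setP => -[u|e]; rewrite !inE ?memE ?andNb //.
  case: (eqVneq e x1) => [->|ne] /=.
    by rewrite h1 andbT orbF; apply/eqP => ee; rewrite -ee h1 in h2.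
  by case: eqP => //= _; rewrite andNb.
have -> : conf X (x2 |: F :\ x1) :\: conf X F = [set inr x2].
  apply/setP => -[u|e]; rewrite !inE ?memE ?andNb //.
  case: (eqVneq e x2) => [->|ne]; first by rewrite (negbTE h2).
  by case: (e \in F); rewrite ?andbF.
by rewrite !cards1.
Qed.

From mathcomp Require Import zify.

Lemma setD_card_eq (T : finType) (A B : {set T}) :
  #|A| = #|B| -> #|A :\: B| = #|B :\: A|.
Proof. by move=> e; rewrite !cardsD e setIC. Qed.

Lemma eq_of_card0 (T : finType) (A B : {set T}) :
  #|A :\: B| = 0 -> #|A| = #|B| -> A = B.
Proof.
move=> h e; apply/eqP; rewrite eqEcard -setD_eq0 -cards_eq0 h e leqnn //.
Qed.

Lemma swap_card (T : finType) (A B : {set T}) x1 x2 :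
  x1 \in A -> x1 \notin B -> x2 \in B -> x2 \notin A ->
  #|x2 |: A :\ x1| = #|A| /\ #|(x2 |: A :\ x1) :\: B| = #|A :\: B| - 1.
Proof.
move=> a1 b1 b2 a2; split.
  rewrite cardsU1 !inE negb_and a2 orbT (cardsD1 x1 A) a1; lia.
have -> : (x2 |: A :\ x1) :\: B = (A :\: B) :\ x1.
  apply/setP => z; rewrite !inE; case: (eqVneq z x2) => [->|] /=; first by rewrite b2 !andbF.
  by move=> _; case: (z \notin B); case: (z != x1).
have := cardsD1 x1 (A :\: B); rewrite !inE a1 b1 /=; lia.
Qed.

Lemma swap_mem (T : finType) (A B : {set T}) x1 x2 z :
  x2 \in B -> z \in (x2 |: A :\ x1) :|: B -> z \in A :|: B.
Proof.
move=> b2; rewrite !inE; case: (eqVneq z x2) => [->|_] /=; first by rewrite b2 !orbT.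
by case: (z \in A); case: (z \in B); rewrite ?andbF ?orbT.
Qed.

Lemma reach (V : finType) (g : rel V) p n (X1 X2 : {set V}) (F1 F2 : {set edge_t g}) :
  #|X1 :\: X2| + #|F1 :\: F2| <= n -> #|X1| = p -> #|F1| = p -> #|X2| = p -> #|F2| = p ->
  (forall x e, x \in X1 :|: X2 -> e \in F1 :|: F2 -> x \notin val e) ->
  TJ_seq (is_biclique (@Hrel V g) p p) (conf X1 F1) (conf X2 F2).
Proof.
elim: n X1 F1 => [|n IH] X1 F1 hn c1 d1 c2 d2 hd.
  move: hn; rewrite leqn0 addn_eq0 => /andP[/eqP h1 /eqP h2].
  rewrite (eq_of_card0 h1) ?c1 ?c2 // (eq_of_card0 h2) ?d1 ?d2 //.
  apply: TJ_refl; apply: conf_bic => // x e hx he; apply: hd; by rewrite inE ?hx ?he ?orbT.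
have hb1 : is_biclique (@Hrel V g) p p (conf X1 F1).
  by apply: conf_bic => // x e hx he; apply: hd; rewrite inE ?hx ?he.
have [hX|hX] := posnP #|X1 :\: X2|.
  have [hF|hF] := posnP #|F1 :\: F2|.
    rewrite (eq_of_card0 hX) ?c1 ?c2 // (eq_of_card0 hF) ?d1 ?d2 //.
    apply: TJ_refl; apply: conf_bic => // x e hx he; apply: hd; by rewrite inE ?hx ?he ?orbT.
  have hF' := hF; case/card_gt0P: hF' => e1; rewrite inE => /andP[e1n2 e1in].
  have : 0 < #|F2 :\: F1| by rewrite -(setD_card_eq (A := F1)) ?d1 ?d2.
  case/card_gt0P => e2; rewrite inE => /andP[e2n1 e2in].
  have [cc cd] := swap_card e1in e1n2 e2in e2n1.
  apply: (TJ_trans (Y := conf X1 (e2 |: F1 :\ e1))).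
    apply: TJ_one => //; last exact: swapF.
    apply: conf_bic; rewrite ?cc // => x e hx he; apply: hd; first by rewrite inE hx.
    by apply: (swap_mem (x1 := e1) e2in); rewrite inE he.
  apply: IH; rewrite ?cc //; first by rewrite cd; lia.
  by move=> x e hx /(swap_mem e2in) he; apply: hd.
have hX' := hX; case/card_gt0P: hX' => e1; rewrite inE => /andP[e1n2 e1in].
have : 0 < #|X2 :\: X1| by rewrite -(setD_card_eq (A := X1)) ?c1 ?c2.
case/card_gt0P => e2; rewrite inE => /andP[e2n1 e2in].
have [cc cd] := swap_card e1in e1n2 e2in e2n1.
apply: (TJ_trans (Y := conf (e2 |: X1 :\ e1) F1)).
  apply: TJ_one => //; last exact: swapX.
  apply: conf_bic; rewrite ?cc // => x e hx he; apply: hd; last by rewrite inE he.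
  by apply: (swap_mem (x1 := e1) e2in); rewrite inE hx.
apply: IH; rewrite ?cc //; first by rewrite cd; lia.
by move=> x e /(swap_mem e2in) hx he; apply: hd.
Qed.

Definition EK (V : finType) (g : rel V) (K : {set V}) : {set edge_t g} :=
  [set e : edge_t g | val e \subset K].

Lemma S_conf (V : finType) (g : rel V) (K : {set V}) w :
  S_of g K w = conf (~: K :\ w) (EK g K).
Proof.
apply/setP => -[u|e]; rewrite /S_of /edges_in !inE ?memE.
  by rewrite orbF inE.
by rewrite !inE.
Qed.

Lemma card_EK (V : finType) (g : rel V) k (K : {set V}) :
  simple_graph g -> is_clique g k K -> #|EK g K| = 'C(k, 2).
Proof.
move=> [irr sym] /andP[/eqP cK cl].
rewrite -cK -cards_draws -(card_imset (EK g K) val_inj).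
rewrite (_ : [set val x | x in EK g K] = [set A : {set V} | A \subset K & #|A| == 2]) //.
apply/setP => B; rewrite !inE; apply/imsetP/andP.
  move=> [e]; rewrite inE => sub ->; split => //.
  case: e sub => /= B' /existsP[x /existsP[y /andP[gxy /eqP ->]]] _.
  by rewrite cards2; case: (eqVneq x y) gxy => [->|]; rewrite ?irr.
move=> [sub /cards2P[x [y [ne eB]]]].
have gxy : g x y.
  have hx : x \in K by apply: (subsetP sub); rewrite eB !inE eqxx.
  have hy : y \in K by apply: (subsetP sub); rewrite eB !inE eqxx orbT.
  by have := forallP cl x; rewrite hx => /forall_inP/(_ y hy); rewrite ne.
have ie : is_edge g B by apply/existsP; exists x; apply/existsP; exists y; rewrite gxy eB eqxx.
by exists (exist _ B ie); rewrite // inE.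
Qed.

Lemma reach_S (V : finType) (g : rel V) k (K K1 : {set V}) w w1 :
  simple_graph g -> is_clique g k K -> is_clique g k K1 ->
  #|V| - k - 1 = 'C(k, 2) -> w \notin K -> w1 \notin K1 ->
  (forall x, x \in (~: K :\ w) :|: (~: K1 :\ w1) -> x \notin K :|: K1) ->
  TJ_seq (is_biclique (@Hrel V g) (#|V| - k - 1) (#|V| - k - 1))
         (S_of g K w) (S_of g K1 w1).
Proof.
move=> sg cK cK1 hp wK wK1 hx; rewrite !S_conf.
have cardX (L : {set V}) u : is_clique g k L -> u \notin L -> #|~: L :\ u| = #|V| - k - 1.
  move=> /andP[/eqP cL _] uL; have := cardsD1 u (~: L); have := cardsC L.
  rewrite !inE uL cL /=; lia.
apply: (reach (n := _) (leqnn _)); rewrite ?(cardX K w) ?(cardX K1 w1) ?(card_EK sg cK) ?(card_EK sg cK1) ?hp //.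
move=> x e /hx xn he; apply/negP => xe; move/negP: xn; apply.
rewrite !inE in he *.
by case/orP: he => /subsetP/(_ x xe)->; rewrite ?orbT.
Qed.

Lemma main_ind (V : finType) (g : rel V) k (s : seq {set V}) :
  simple_graph g -> #|V| - k - 1 = 'C(k, 2) ->
  forall K w, (forall Z, Z \in K :: s -> is_clique g k Z) ->
  path (@tj_step V) K s -> w \notin K -> forall w', w' \notin last K s ->
  TJ_seq (is_biclique (@Hrel V g) (#|V| - k - 1) (#|V| - k - 1))
         (S_of g K w) (S_of g (last K s) w').
Proof.
move=> sg hp; elim: s => [|K1 s IH] K w cl ps wK w' w'K.
  have cK : is_clique g k K by apply: cl; rewrite inE.
  apply: reach_S => // x; rewrite /= !inE orbb => /orP[] /andP[_ ->] //.
have cK0 : is_clique g k K by apply: cl; rewrite inE eqxx.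
have cK1 : is_clique g k K1 by apply: cl; rewrite !inE eqxx orbT.
move: ps => /= /andP[/andP[/cards1P[a ha] /cards1P[b hb]] ps].
have /setP/(_ a) := ha; rewrite !inE eqxx => /andP[aK1 aK].
have /setP/(_ b) := hb; rewrite !inE eqxx => /andP[bK bK1].
apply: (TJ_trans (Y := S_of g K b)).
  apply: reach_S => // x; rewrite !inE orbb => /orP[] /andP[_ ->] //.
apply: (TJ_trans (Y := S_of g K1 a)).
  apply: reach_S => // x; rewrite !inE => /orP[] /andP[xn xK]; apply/negP => /orP[] xK'.
  - by move: xK; rewrite xK'.
  - by have /setP/(_ x) := hb; rewrite !inE xK' xK (negbTE xn).
  - by have /setP/(_ x) := ha; rewrite !inE xK' xK (negbTE xn).
  - by move: xK; rewrite xK'.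
apply: IH => //.
by move=> Z hZ; apply: cl; rewrite inE hZ orbT.
Qed.

Theorem lemma3 (V : finType) (g : rel V) (k : nat) (K K' : {set V}) (v v' : V) :
  simple_graph g ->
  ~ bipartite g ->
  5 <= #|V| ->
  is_clique g k K -> is_clique g k K' ->
  #|V| - k - 1 = 'C(k, 2) ->
  v \notin K -> v' \notin K' ->
  TJ_seq (fun X => is_clique g k X) K K' ->
  TJ_seq (is_biclique (@Hrel V g) (#|V| - k - 1) (#|V| - k - 1))
         (S_of g K v) (S_of g K' v').
Proof.
move=> sg _ _ cK cK' hp vK v'K' [s [ps ls cl]].
rewrite -ls; apply: main_ind => //; by rewrite ls.
Qed.
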